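(* Let $d\le k$ and let $R$ be a $d\times k$ matrix that is weakly completely-$\mathcal S$ with respect to $f:\{1,\dots,k\}\to\mathcal P(\{1,\dots,d\})$, where $f(j)\ne\emptyset$ for all $j$ and, for each $1\le i\le d$, $f(j)=\{i\}$ iff $j=i$. Then there is a constant $C>0$ depending only on $R$ and $f$ such that the following holds. Whenever $\delta>0$, $0\le t_1<t_2<\infty$, $w,x\in C([t_1,t_2],\mathbb R^d)$ and $y\in C([t_1,t_2],\mathbb R^k)$ satisfy (i) $w(t)=x(t)+Ry(t)$ for all $t\in[t_1,t_2]$; (ii) $w(t)\in\mathbb R^d_{\ge0}$ for all $t\in[t_1,t_2]$; (iii) for each $j$: $y_j(t_1)\ge0$, $y_j$ is nondecreasing, and $\int_{t_1}^{t_2}\mathbf 1(w_i(s)>\delta\text{ for some }i\in f(j))\,dy_j(s)=0$; then $$\mathrm{Osc}(y,[t_1,t_2])\le C\big(\mathrm{Osc}(x,[t_1,t_2])+\delta\big),\qquad \mathrm{Osc}(w,[t_1,t_2])\le C\big(\mathrm{Osc}(x,[t_1,t_2])+\delta\big).$$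
   Context: For $g\in C([t_1,t_2],\mathbb R^m)$, $\mathrm{Osc}(g,[t_1,t_2])=\sup\{\max_{1\le l\le m}|g_l(t)-g_l(s)|: t_1\le s<t\le t_2\}$. Weakly completely-$\mathcal S$: for a $d\times k$ matrix $R$ and $f:\{1,\dots,k\}\to\mathcal P(\{1,\dots,d\})$, for nonempty $I\subseteq\{1,\dots,d\}$ set $J_I=\{1\le j\le k: f(j)\subseteq I\}$ and $R_I=R_{I,J_I}$; $R$ is weakly completely-$\mathcal S$ w.r.t. $f$ if for every nonempty $I$ there is $\lambda_I\in\mathbb R^I_{>0}$ with $(\lambda_I^\top R_I)_j\ge1$ for all $j\in J_I$. *)

(* Defs.v *)
From HB Require Import structures.
From mathcomp Require Import all_boot all_order all_algebra.
From mathcomp Require Import all_classical all_reals all_analysis.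
Set Implicit Arguments. Unset Strict Implicit. Unset Printing Implicit Defensive.
Import Order.TTheory GRing.Theory Num.Theory.
Import numFieldNormedType.Exports.
Local Open Scope classical_set_scope.
Local Open Scope ring_scope.

Definition weakly_completely_S {R : realType} (d k : nat) (M : 'M[R]_(d, k))
  (f : 'I_k -> {set 'I_d}) : Prop :=
  forall I : {set 'I_d}, I != finset.set0 ->
    exists lam : 'I_d -> R,
      (forall i, i \in I -> 0 < lam i) /\
      (forall j : 'I_k, f j \subset I -> 1 <= \sum_(i in I) lam i * M i j).

Definition Osc {R : realType} (m : nat) (g : R -> 'I_m -> R) (t1 t2 : R) : R :=
  sup [set r | exists s t, t1 <= s /\ s < t /\ t <= t2 /\
                 r = \big[Num.max/0]_(l < m) `|g t l - g s l| ].

Definition clamp_ext {R : realType} (F : R -> R) (t1 t2 : R) : R -> R :=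
  fun s => F (Num.min (Num.max s t1) t2).

(* the Lebesgue-Stieltjes (outer) measure dF of a set A: the Caratheodory
   extension of the length F(b) - F(a) of half-open intervals ]a,b] *)
Definition stieltjes_outer {R : realType} (F : R -> R) (A : set R) : \bar R :=
  measure_extension.mu_ext (wlength F) A.

(* Main.v *)
Require Import Defs.
From HB Require Import structures.
From mathcomp Require Import all_boot all_order all_algebra.
From mathcomp Require Import all_classical all_reals all_analysis.
From mathcomp Require Import lra.
Import Order.TTheory GRing.Theory Num.Theory.
Import numFieldNormedType.Exports.
Local Open Scope classical_set_scope.
Local Open Scope ring_scope.

Section Flat.
Variables (R : realType) (g : R -> R) (t1 t2 : R).
Hypothesis t12 : t1 < t2.
Hypothesis gc : {within `[t1, t2], continuous g}.
Hypothesis gnd : forall s t, t1 <= s -> s <= t -> t <= t2 -> g s <= g t.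

Let F := clamp_ext g t1 t2.

Let clampin s : t1 <= Num.min (Num.max s t1) t2 <= t2.
Proof.
apply/andP; split.
  by rewrite le_min le_max lexx orbT ltW.
by rewrite ge_min lexx orbT.
Qed.

Let Fnd : nondecreasing F.
Proof.
move=> s t st; rewrite /F /clamp_ext.
have := clampin s; have := clampin t => /andP[? ?] /andP[? ?].
apply: gnd => //.
apply: le_min2 => //; exact: le_max2.
Qed.

Let Frc : right_continuous F.
Proof.
move=> s; apply/cvgrPdist_lt => e e0.
have [st1|t1s] := ltP s t1.
  rewrite near_withinE; apply: filterS (lt_nbhsl st1) => t tt1 _.
  rewrite /F /clamp_ext (max_r (ltW st1)) (max_r (ltW tt1)) subrr normr0 //.
have [st2|t2s] := ltP s t2; last first.
  rewrite near_withinE; apply: nearW => t st.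
  have t2t : t2 <= t by apply: le_trans t2s (ltW st).
  rewrite /F /clamp_ext (max_l (le_trans (ltW t12) t2s)).
  rewrite (max_l (le_trans (ltW t12) t2t)) (min_r t2s) (min_r t2t) subrr normr0 //.
have := (subspace_continuousP _ _).1 gc s.
have sin : `[t1, t2]%classic s by rewrite /= in_itv /= t1s (ltW st2).
move=> /(_ sin) /cvgrPdist_lt /(_ e e0); rewrite !near_withinE => H.
apply: filterS2 H (lt_nbhsl st2) => t Ht tt2 st.
have t1t : t1 <= t by apply: le_trans t1s (ltW st).
rewrite /F /clamp_ext (max_l t1s) (max_l t1t) (min_l (ltW st2)) (min_l (ltW tt2)).
by apply: Ht; rewrite /= in_itv /= t1t (ltW tt2).
Qed.

Definition Fcum : cumulative R R :=
  HB.pack_for (cumulative R R) F (isCumulative.Build R _ R F Fnd Frc).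

Lemma flat_ext (u v : R) (S : set R) : t1 <= u -> u <= v -> v <= t2 ->
  `]u, v] `<=` S -> measure_extension.mu_ext (wlength F) S = 0%E -> g v = g u.
Proof.
move=> tu uv vt sub h0.
have : (measure_extension.mu_ext (wlength Fcum) `]u, v] <= 0)%E.
  rewrite -h0; exact: measure_extension.le_mu_ext.
rewrite measurable_mu_extE; last exact: is_ocitv.
rewrite /= wlength_itv_bnd // lee_fin subr_le0 /= /F /clamp_ext.
rewrite (max_l (le_trans tu uv)) (min_l vt) (max_l tu) (min_l (le_trans uv vt)) => h.
by apply/eqP; rewrite eq_le h gnd.
Qed.
End Flat.

Section OscL.
Variables (R : realType) (m : nat) (g : R -> 'I_m -> R) (t1 t2 : R).
Hypothesis t12 : t1 < t2.

Lemma osc_le (c : R) : 0 <= c ->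
  (forall s t l, t1 <= s -> s < t -> t <= t2 -> `|g t l - g s l| <= c) ->
  Osc g t1 t2 <= c.
Proof.
move=> c0 H; apply: ge_sup.
  exists (\big[Num.max/0]_(l < m) `|g t2 l - g t1 l|).
  by exists t1, t2; split => //; split => //; split.
move=> r [s [t [h1 [h2 [h3 ->]]]]].
by apply: bigmax_le => // l _; apply: H.
Qed.

Hypothesis gc : forall l, {within `[t1, t2], continuous (fun t => g t l)}.

Lemma osc_ge0 : 0 <= Osc g t1 t2 /\
  forall s t l, t1 <= s <= t2 -> t1 <= t <= t2 -> `|g t l - g s l| <= Osc g t1 t2.
Proof.
have : forall l, exists p : R * R, forall t, t1 <= t <= t2 -> p.1 <= g t l <= p.2.
  move=> l.
  have [cM cMin HM] := EVT_max (ltW t12) (gc l).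
  have [cm cmin Hm] := EVT_min (ltW t12) (gc l).
  exists (g cm l, g cM l) => t tin /=.
  by rewrite Hm ?HM // in_itv /= tin.
move=> /choice [p Hp].
pose B := \sum_(l < m) ((p l).2 - (p l).1).
have Hl : forall s t l, t1 <= s <= t2 -> t1 <= t <= t2 -> `|g t l - g s l| <= B.
  move=> s t l sin tin.
  have Bl : forall l, 0 <= (p l).2 - (p l).1.
    move=> l'; have := Hp l' s sin; rewrite subr_ge0 => /andP[a b].
    exact: le_trans a b.
  apply: (@le_trans _ _ ((p l).2 - (p l).1)); last first.
    rewrite /B (bigD1 l) //= lerDl; apply: sumr_ge0 => i _; exact: Bl.
  have := Hp l s sin; have := Hp l t tin => /andP[a b] /andP[c e].
  rewrite ler_norml; apply/andP; split; lra.
have hub : has_ubound [set r | exists s t, t1 <= s /\ s < t /\ t <= t2 /\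
                 r = \big[Num.max/0]_(l < m) `|g t l - g s l| ].
  exists B => r [s [t [h1 [h2 [h3 ->]]]]].
  apply: bigmax_le.
    apply: sumr_ge0 => l _; have := Hp l t1; rewrite lexx (ltW t12) => /(_ isT).
    by rewrite subr_ge0 => /andP[a b]; exact: le_trans a b.
  move=> l _; apply: Hl; apply/andP; split => //; lra.
have key : forall s t, t1 <= s -> s < t -> t <= t2 -> forall l,
    `|g t l - g s l| <= Osc g t1 t2.
  move=> s t h1 h2 h3 l.
  apply: le_trans (le_bigmax _ (fun l => `|g t l - g s l|) l) _.
  apply: ub_le_sup => //; by exists s, t.
have O0 : 0 <= Osc g t1 t2.
  apply: le_trans (ub_le_sup hub _); last first.
    by exists t1, t2; split => //; split => //; split.
  apply: (big_ind (fun x : R => 0 <= x)) => //.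
  by move=> a b a0 b0; rewrite le_max a0.
split => // s t l /andP[s1 s2] /andP[u1 u2].
have [st|ts|<-] := ltgtP s t.
- exact: key.
- by rewrite distrC; apply: key.
- by rewrite subrr normr0.
Qed.
End OscL.

Fixpoint Cn {R : realType} (Lam N : R) (n : nat) : R :=
  match n with 0%N => 0 | n'.+1 => Lam * (3 + N * Cn Lam N n') end.

Lemma Cn_ge0 {R : realType} (Lam N : R) n : 0 <= Lam -> 0 <= N -> 0 <= Cn Lam N n.
Proof.
move=> L0 N0; elim: n => [|n IH] //=.
by apply: mulr_ge0 => //; apply: addr_ge0 => //; apply: mulr_ge0.
Qed.

Section Main.
Variables (R : realType) (d k : nat) (M : 'M[R]_(d, k)) (f : 'I_k -> {set 'I_d}).
Variable lamf : {set 'I_d} -> 'I_d -> R.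
Hypothesis hlam : forall I : {set 'I_d}, I != finset.set0 ->
  (forall i, i \in I -> 0 < lamf I i) /\
  (forall j, f j \subset I -> 1 <= \sum_(i in I) lamf I i * M i j).
Hypothesis fne : forall j, f j != finset.set0.
Let Lam : R := \sum_(I : {set 'I_d}) \sum_i `|lamf I i|.
Let N : R := \sum_i \sum_j `|M i j|.
Variables (delta t1 t2 Ox : R) (w x : R -> 'I_d -> R) (y : R -> 'I_k -> R).
Hypothesis d0 : 0 < delta.
Hypothesis Ox0 : 0 <= Ox.
Hypothesis hxosc : forall s t i, t1 <= s <= t2 -> t1 <= t <= t2 -> `|x t i - x s i| <= Ox.
Hypothesis wc : forall i, {within `[t1, t2], continuous (fun t : R => (w t i : R))}.
Hypothesis hwx : forall t, t1 <= t <= t2 -> forall i, w t i = x t i + \sum_(j < k) M i j * y t j.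
Hypothesis hw0 : forall t, t1 <= t <= t2 -> forall i, 0 <= w t i.
Hypothesis hmono : forall j s t, t1 <= s -> s <= t -> t <= t2 -> y s j <= y t j.
Hypothesis hflat : forall j u v, t1 <= u -> u <= v -> v <= t2 ->
  (forall s, u < s <= v -> exists i, i \in f j /\ delta < w s i) -> y v j = y u j.
Let eps : R := Ox + delta.

Lemma Lam0 : 0 <= Lam.
Proof. by apply: sumr_ge0 => I _; apply: sumr_ge0. Qed.
Lemma N0 : 0 <= N.
Proof. by apply: sumr_ge0 => I _; apply: sumr_ge0. Qed.
Lemma eps0 : 0 <= eps.
Proof. rewrite /eps; apply: addr_ge0 => //; exact: ltW. Qed.

Lemma MleN i j : `|M i j| <= N.
Proof.
rewrite /N (bigD1 i) //= (bigD1 j) //= -addrA lerDl.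
apply: addr_ge0; apply: sumr_ge0 => *; [done|apply: sumr_ge0 => *; done].
Qed.

Lemma dw a b i : t1 <= a -> a <= b -> b <= t2 ->
  w b i - w a i = (x b i - x a i) + \sum_j M i j * (y b j - y a j).
Proof.
move=> ta ab bt.
rewrite !hwx; last 2 first.
- by rewrite ta (le_trans ab bt).
- by rewrite bt (le_trans ta ab).
rewrite [in RHS](eq_bigr (fun j => M i j * y b j - M i j * y a j)); last first.
  by move=> j _; rewrite mulrBr.
rewrite sumrB; lra.
Qed.

Lemma sumM_le a b i : t1 <= a -> a <= b -> b <= t2 ->
  \sum_j M i j * (y b j - y a j) <= N * \sum_j (y b j - y a j).
Proof.
move=> ta ab bt; rewrite mulr_sumr; apply: ler_sum => j _.
have D0 : 0 <= y b j - y a j by rewrite subr_ge0 hmono.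
apply: le_trans (ler_wpM2r D0 (MleN i j)).
by apply: le_trans (ler_norm _) _; rewrite normrM (ger0_norm D0).
Qed.

Lemma claim n : forall I : {set 'I_d}, #|I| = n -> forall a b, t1 <= a -> a <= b -> b <= t2 ->
  (forall j, ~~ (f j \subset I) -> y b j = y a j) ->
  \sum_j (y b j - y a j) <= Cn Lam N n * eps.
Proof.
elim: n => [|n IH] I cI a b ta ab bt hy.
  have I0 : I = finset.set0 by apply/eqP; rewrite -cards_eq0 cI.
  rewrite /= mul0r big1 // => j _; rewrite hy ?subrr //.
  by rewrite I0 finset.subset0 fne.
have I0 : I != finset.set0 by rewrite -card_gt0 cI.
have [lpos lge] := hlam I I0.
have C0 := @Cn_ge0 _ Lam N n Lam0 N0.
have wb : forall i, i \in I -> w b i - w a i <= (2 + N * Cn Lam N n) * eps.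
  move=> i iI.
  have seg : forall u, a <= u -> u <= b -> (forall s, u < s <= b -> delta < w s i) ->
      w b i - w u i <= eps + N * Cn Lam N n * eps.
    move=> u au ub hs.
    have tu : t1 <= u by apply: le_trans ta au.
    have hyu : \sum_j (y b j - y u j) <= Cn Lam N n * eps.
      apply: (IH (I :\ i)) => //.
        by move: cI; rewrite (cardsD1 i) iI add1n => -[].
      move=> j hj; case: (boolP (f j \subset I)) => hjI.
        apply: hflat => // s sin; exists i; split; last exact: hs.
        apply/negPn/negP => ni; apply: (negP hj); apply/fintype.subsetP => z zf.
        rewrite in_setD1 (fintype.subsetP hjI) // andbT; apply/eqP => zi.
        by move: ni; rewrite -zi zf.
      have e := hy j hjI; apply/eqP; rewrite eq_le; apply/andP; split.
        by rewrite e; apply: hmono => //; apply: le_trans ub bt.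
      exact: hmono.
    rewrite dw //.
    apply: lerD.
      apply: le_trans (ler_norm _) _; apply: le_trans (hxosc u b i _ _) _.
      - by rewrite tu (le_trans ub bt).
      - by rewrite bt (le_trans ta ab).
      - rewrite /eps lerDl; exact: ltW.
    apply: le_trans (sumM_le u b i tu ub bt) _.
    rewrite -mulrA; apply: ler_wpM2l => //; exact: N0.
  case: (pselect (exists t, a <= t <= b /\ w t i <= delta)) => [[t0 [t0in t0w]]|nE]; last first.
    apply: le_trans (seg a (lexx a) ab _) _.
      move=> s /andP[a_s sb]; rewrite ltNge; apply/negP => ws; apply: nE.
      by exists s; rewrite (ltW a_s) sb.
    rewrite mulrDl lerD2r; have := eps0; lra.
  pose E := [set t | a <= t <= b /\ w t i <= delta].
  have hE : has_sup E.
    split; first by exists t0.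
    by exists b => t [/andP[_ tb] _].
  have rub : forall t, E t -> t <= sup E := sup_upper_bound hE.
  have arho : a <= sup E.
    apply: le_trans (rub t0 (conj t0in t0w)); by case/andP: t0in.
  have rhob : sup E <= b.
    by apply: ge_sup; [exists t0 | move=> t [/andP[_ tb] _]].
  have rhoin : `[t1, t2]%classic (sup E).
    by rewrite /= in_itv /= (le_trans ta arho) (le_trans rhob bt).
  have wrho : w (sup E) i <= delta.
    rewrite leNgt; apply/negP => dr.
    have := (subspace_continuousP _ _).1 (wc i) (sup E) rhoin.
    move=> /cvgrPdist_lt /(_ (w (sup E) i - delta)); rewrite subr_gt0 => /(_ dr).
    rewrite near_withinE => /nbhs_normP [eta /= eta0 Heta].
    have [t [tin tw] rt] := sup_adherent eta0 hE.
    have tr := rub t (conj tin tw).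
    have tin' : `[t1, t2]%classic t.
      by case/andP: tin => a_t tb; rewrite /= in_itv /= (le_trans ta a_t) (le_trans tb bt).
    have := Heta t _ tin'.
    have : `|(sup E : R) - t| < eta.
      by rewrite ger0_norm ?subr_ge0 //; lra.
    move=> /[swap] /[apply].
    rewrite ltr_norml => /andP[_ h2]; move: h2; rewrite /from_subspace /= ltrD2l ltrN2 => h2; by have := lt_le_trans h2 tw; rewrite ltxx.
  have := seg (sup E) arho rhob.
  have hs : forall s, sup E < s <= b -> delta < w s i.
    move=> s /andP[rs sb]; rewrite ltNge; apply/negP => ws.
    have Es : E s by split => //; rewrite (ltW (le_lt_trans arho rs)) sb.
    by have := rub s Es; rewrite leNgt rs.
  move=> /(_ hs) h.
  have wa : 0 <= w a i by apply: hw0; rewrite ta (le_trans ab bt).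
  have de : delta <= eps by rewrite /eps lerDr.
  have := eps0; rewrite mulrDl; lra.
pose K := (3 + N * Cn Lam N n) * eps.
have K0 : 0 <= K.
  apply: mulr_ge0; last exact: eps0.
  apply: addr_ge0 => //; apply: mulr_ge0 => //; exact: N0.
have step1 : \sum_j (y b j - y a j) <=
    \sum_j (\sum_(i in I) lamf I i * M i j) * (y b j - y a j).
  apply: ler_sum => j _.
  have D0 : 0 <= y b j - y a j by rewrite subr_ge0 hmono.
  case: (boolP (f j \subset I)) => hj; first exact: ler_peMl (lge j hj).
  by rewrite hy // subrr mulr0.
have step2 : \sum_j (\sum_(i in I) lamf I i * M i j) * (y b j - y a j) =
    \sum_(i in I) lamf I i * \sum_j M i j * (y b j - y a j).
  rewrite (eq_bigr (fun j => \sum_(i in I) lamf I i * M i j * (y b j - y a j))); last first.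
    by move=> j _; rewrite mulr_suml.
  rewrite exchange_big /=; apply: eq_bigr => i _; rewrite mulr_sumr.
  by apply: eq_bigr => j _; rewrite mulrA.
have step3 : forall i, i \in I -> \sum_j M i j * (y b j - y a j) <= K.
  move=> i iI; have := wb i iI; rewrite dw //.
  have : `|x b i - x a i| <= eps.
    apply: le_trans (hxosc a b i _ _) _.
    - by rewrite ta (le_trans ab bt).
    - by rewrite bt (le_trans ta ab).
    - rewrite /eps lerDl; exact: ltW.
  rewrite ler_norml => /andP[h1 h2].
  rewrite /K !mulrDl; lra.
have step4 : \sum_(i in I) lamf I i * \sum_j M i j * (y b j - y a j) <=
    \sum_(i in I) lamf I i * K.
  apply: ler_sum => i iI; apply: ler_wpM2l; [exact: ltW (lpos i iI) | exact: step3].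
have step5 : \sum_(i in I) lamf I i * K <= Lam * K.
  rewrite -mulr_suml; apply: ler_wpM2r => //.
  apply: (@le_trans _ _ (\sum_(i in I) `|lamf I i|)).
    by apply: ler_sum => i _; exact: ler_norm.
  apply: (@le_trans _ _ (\sum_i `|lamf I i|)).
    rewrite [X in _ <= X](bigID (fun i => i \in I)) /= lerDl.
    by apply: sumr_ge0 => *.
  rewrite /Lam (bigD1 I) //= lerDl; apply: sumr_ge0 => *; apply: sumr_ge0 => *; done.
rewrite /= -mulrA -/K.
apply: le_trans step1 _; rewrite step2.
exact: le_trans step4 step5.
Qed.
End Main.

Theorem proposition7p1 (R : realType) (d k : nat) (M : 'M[R]_(d, k))
  (f : 'I_k -> {set 'I_d}) :
  (d <= k)%N ->
  weakly_completely_S M f ->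
  (forall j : 'I_k, f j != finset.set0) ->
  (forall (i : 'I_d) (j : 'I_k), f j = finset.set1 i <-> val j = val i) ->
  exists C : R, 0 < C /\
    forall (delta t1 t2 : R) (w x : R -> 'I_d -> R) (y : R -> 'I_k -> R),
      0 < delta -> 0 <= t1 -> t1 < t2 ->
      (forall i, {within `[t1, t2], continuous (fun t : R => (w t i : R))}) ->
      (forall i, {within `[t1, t2], continuous (fun t : R => (x t i : R))}) ->
      (forall j, {within `[t1, t2], continuous (fun t : R => (y t j : R))}) ->
      (forall t, t1 <= t <= t2 -> forall i, w t i = x t i + \sum_(j < k) M i j * y t j) ->
      (forall t, t1 <= t <= t2 -> forall i, 0 <= w t i) ->
      (forall j, 0 <= y t1 j /\
         (forall s t, t1 <= s -> s <= t -> t <= t2 -> y s j <= y t j) /\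
         stieltjes_outer (clamp_ext (fun s => y s j) t1 t2)
           [set s | t1 <= s <= t2 /\ exists i, i \in f j /\ delta < w s i] = 0%E) ->
      Osc y t1 t2 <= C * (Osc x t1 t2 + delta) /\
      Osc w t1 t2 <= C * (Osc x t1 t2 + delta).
Proof.
move=> dk wcs fne hf.
have H : forall I : {set 'I_d}, exists lam : 'I_d -> R, I != finset.set0 ->
    (forall i, i \in I -> 0 < lam i) /\
    (forall j, f j \subset I -> 1 <= \sum_(i in I) lam i * M i j).
  move=> I; case: (boolP (I != finset.set0)) => hI.
    by have [lam H] := wcs I hI; exists lam.
  by exists (fun _ => 0).
have [lamf hlam] := choice H.
pose Lam : R := \sum_(I : {set 'I_d}) \sum_i `|lamf I i|.
pose N : R := \sum_i \sum_j `|M i j|.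
have Lam0 : 0 <= Lam by apply: sumr_ge0 => I _; apply: sumr_ge0.
have N0 : 0 <= N by apply: sumr_ge0 => I _; apply: sumr_ge0.
pose Cd := Cn Lam N d.
have Cd0 : 0 <= Cd by exact: Cn_ge0.
exists (1 + Cd + N * Cd); split.
  by apply: ltr_wpDr; [apply: mulr_ge0 | apply: ltr_wpDr].
move=> delta t1 t2 w x y d0 t10 t12 wc xc yc hwx hw0 hy.
have [Ox0 hxo] := @osc_ge0 _ _ x t1 t2 t12 xc.
have hmono : forall j s t, t1 <= s -> s <= t -> t <= t2 -> y s j <= y t j.
  by move=> j; case: (hy j) => _ [].
have hflat : forall j u v, t1 <= u -> u <= v -> v <= t2 ->
    (forall s, u < s <= v -> exists i, i \in f j /\ delta < w s i) -> y v j = y u j.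
  move=> j u v tu uv vt hs.
  apply: (@flat_ext R (fun s => y s j) t1 t2 t12 (yc j) (hmono j) u v
    [set s | t1 <= s <= t2 /\ exists i, i \in f j /\ delta < w s i]) => //.
    move=> s /=; rewrite in_itv /= => /andP[us sv]; split; last first.
      by apply: hs; rewrite us sv.
    by rewrite (le_trans tu (ltW us)) (le_trans sv vt).
  by case: (hy j) => _ [].
set Ox := Osc x t1 t2.
have cl := @claim _ _ _ M f lamf hlam fne delta t1 t2 Ox w x y d0 Ox0 hxo wc hwx hw0 hmono hflat.
have eps0 : 0 <= Ox + delta by apply: addr_ge0 => //; exact: ltW.
have hY : forall s t j, t1 <= s -> s <= t -> t <= t2 -> y t j - y s j <= Cd * (Ox + delta).
  move=> s t j ts st tt.
  have hc : #|(finset.setT : {set 'I_d})| = d by rewrite cardsT card_ord.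
  have hs : forall j', ~~ (f j' \subset (finset.setT : {set 'I_d})) -> y t j' = y s j'.
    by move=> j'; rewrite finset.subsetT.
  apply: le_trans (cl d _ hc s t ts st tt hs).
  rewrite (bigD1 j) //= lerDl; apply: sumr_ge0 => j' _.
  by rewrite subr_ge0; apply: hmono.
have eC : 0 <= Cd * (Ox + delta) by apply: mulr_ge0.
split.
  apply: (@osc_le _ _ y t1 t2 t12) => //.
    by apply: mulr_ge0 => //; apply: addr_ge0 => //; [apply: addr_ge0|apply: mulr_ge0].
  move=> s t j ts st tt.
  rewrite ger0_norm; last by rewrite subr_ge0; apply: hmono => //; exact: ltW.
  apply: le_trans (hY s t j ts (ltW st) tt) _.
  apply: ler_wpM2r => //; have := mulr_ge0 N0 Cd0; lra.
apply: (@osc_le _ _ w t1 t2 t12) => //.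
  by apply: mulr_ge0 => //; apply: addr_ge0 => //; [apply: addr_ge0|apply: mulr_ge0].
move=> s t i ts st tt.
have sin : t1 <= s <= t2 by rewrite ts (le_trans (ltW st) tt).
have tin : t1 <= t <= t2 by rewrite tt (le_trans ts (ltW st)).
rewrite (@dw _ _ _ M t1 t2 w x y hwx s t i ts (ltW st) tt).
apply: le_trans (ler_normD _ _) _.
have h1 := hxo s t i sin tin.
have h2 : `|\sum_j M i j * (y t j - y s j)| <= N * (Cd * (Ox + delta)).
  apply: le_trans (ler_norm_sum _ _ _) _.
  apply: (@le_trans _ _ (\sum_j N * (y t j - y s j))).
    apply: ler_sum => j _.
    have D0 : 0 <= y t j - y s j by rewrite subr_ge0; apply: hmono => //; exact: ltW.
    rewrite normrM (ger0_norm D0).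
    apply: ler_wpM2r => //.
    exact: (@MleN _ _ _ M i j).
  rewrite -mulr_sumr; apply: ler_wpM2l => //.
  have hc : #|(finset.setT : {set 'I_d})| = d by rewrite cardsT card_ord.
  have hs : forall j', ~~ (f j' \subset (finset.setT : {set 'I_d})) -> y t j' = y s j'.
    by move=> j'; rewrite finset.subsetT.
  exact: (cl d _ hc s t ts (ltW st) tt hs).
rewrite -/Ox in h1; rewrite mulrA in h2; rewrite !mulrDl mul1r; have := d0; lra.
Qed.
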